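(* For every $n\ge1$, the map sending a nonempty finite sequence $(P_1,\dots,P_j)$ of indecomposable Dyck paths, taken up to cyclic rotation of the sequence, to the necklace of the word $P_1P_2\cdots P_j$ (each path written as a word in $\nearrow,\searrow$, i.e. in $\circ,\bullet$) is a bijection between cyclic sequences of indecomposable Dyck paths of total length $2n$ and $(1,1)$-balanced necklaces of length $2n$. Equivalently, $Cyc_{(1,1)}\simeq Cyc(\nearrow\mathcal{D}\searrow)$ as combinatorial classes (size = length). *)

(* Defs.v *)
(* Words over {up, down} are encoded as seq bool:
   true = up (↗, ∘), false = down (↘, •). *)
From mathcomp Require Import all_boot.
Set Implicit Arguments. Unset Strict Implicit. Unset Printing Implicit Defensive.

Definition dyck (w : seq bool) : bool :=
  (count id w == count negb w) &&
  [forall i : 'I_(size w).+1, count negb (take i w) <= count id (take i w)].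

Definition indecomposable_dyck (w : seq bool) : bool :=
  [&& dyck w, 0 < size w &
   [forall i : 'I_(size w), (0 < val i) ==>
       (count negb (take i w) < count id (take i w))]].

Definition cyc_eq (T : Type) (s t : seq T) : Prop := exists k, rot k s = t.

(* A (1,1)-balanced word: as many ∘ (weight 1) as • (weight 1). *)
Definition balanced11 (w : seq bool) : bool := count id w == count negb w.

Definition cyc_dyck_seq (n : nat) (ss : seq (seq bool)) : Prop :=
  [/\ ss != [::], all indecomposable_dyck ss & size (flatten ss) = 2 * n].

(* Main.v *)
Require Import Defs.
From mathcomp Require Import all_boot.
From Stdlib Require Import Lia.

Ltac nlia := intros; repeat match goal with
 | H : is_true (_ <= _) |- _ => move/leP: H => H
 | H : is_true (_ < _) |- _ => move/ltP: H => H
 | H : is_true (_ == _) |- _ => move/eqP: H => H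
 | |- is_true (_ <= _) => apply/leP
 | |- is_true (_ < _) => apply/ltP
 | |- is_true (_ == _) => apply/eqP
 end;
 unfold addn, subn, minn in *; lia.

Notation up w := (count id w).
Notation dn w := (count negb w).

Lemma updn w : up w + dn w = size w.
Proof. exact: (count_predC id w). Qed.

Lemma dyckP w : dyck w <-> (up w = dn w /\ forall i, dn (take i w) <= up (take i w)).
Proof.
split.
- case/andP=> /eqP Hb /forallP H; split=> // i.
  case: (leqP i (size w)) => Hi.
  + by have := H (Ordinal (n:=(size w).+1) (m:=i) Hi).
  + rewrite take_oversize; last exact: ltnW.
    by have := H (Ordinal (n:=(size w).+1) (m:=size w) (ltnSn _)); rewrite take_size.
- case=> Hb H; apply/andP; split; first by apply/eqP.
  by apply/forallP=> i.
Qed.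

Lemma indecP w : indecomposable_dyck w <->
  [/\ dyck w, 0 < size w & forall i, 0 < i < size w -> dn (take i w) < up (take i w)].
Proof.
split.
- case/and3P=> Hd Hs /forallP H; split=> // i /andP[Hi1 Hi2].
  by have := H (Ordinal Hi2); rewrite /= Hi1.
- case=> Hd Hs H; apply/and3P; split=> //; apply/forallP=> i; apply/implyP=> Hi.
  by apply: H; rewrite Hi ltn_ord.
Qed.

Lemma catI (T : Type) (s x y : seq T) : s ++ x = s ++ y -> x = y.
Proof. by move/(f_equal (drop (size s))); rewrite !drop_size_cat. Qed.

Lemma dyck_cat a b : dyck a -> dyck b -> dyck (a ++ b).
Proof.
move=> /dyckP[Ha Ha'] /dyckP[Hb Hb']; apply/dyckP; split.
  by rewrite !count_cat Ha Hb.
move=> i; rewrite take_cat; case: ltnP => _; first exact: Ha'.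
rewrite !count_cat Ha leq_add2l; exact: Hb'.
Qed.

Lemma dyck_nil : dyck [::].
Proof. by apply/dyckP; split=> // i. Qed.

Lemma dyck_flatten ss : all indecomposable_dyck ss -> dyck (flatten ss).
Proof.
elim: ss => [_|s ss IH] /=; first exact: dyck_nil.
by case/andP=> /indecP[Hs _ _] /IH; apply: dyck_cat.
Qed.

Lemma bal_flatten ss : all indecomposable_dyck ss -> up (flatten ss) = dn (flatten ss).
Proof. by move/dyck_flatten/dyckP=> []. Qed.

Lemma rot_flatten (T : Type) (ss : seq (seq T)) j :
  flatten (rot j ss) = rot (size (flatten (take j ss))) (flatten ss).
Proof.
have E : flatten ss = flatten (take j ss) ++ flatten (drop j ss)
  by rewrite -flatten_cat cat_take_drop.
by rewrite /rot E drop_size_cat // take_size_cat // flatten_cat.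
Qed.

Lemma uniq_fact ss tt : all indecomposable_dyck ss -> all indecomposable_dyck tt ->
  flatten ss = flatten tt -> ss = tt.
Proof.
elim: ss tt => [|s ss IH] [|t tt] //=.
- by move=> _ /andP[/indecP[_ Ht _] _] /(f_equal size); rewrite size_cat; case: (size t) Ht.
- by case/andP=> /indecP[_ Ht _] _ _ /(f_equal size); rewrite size_cat; case: (size s) Ht.
case/andP=> Hs Hss /andP[Ht Htt] E.
suff est : s = t by move: E; rewrite est => /catI /(IH _ Hss Htt) ->.
have key : forall a b x y, indecomposable_dyck a -> indecomposable_dyck b ->
   a ++ x = b ++ y -> size a <= size b -> a = b.
  move=> a b x y /indecP[/dyckP[Ha _] Ha0 _] /indecP[_ _ Hb] Eab.
  rewrite leq_eqVlt; case/orP=> Hab.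
    by move: (f_equal (take (size a)) Eab); rewrite take_size_cat // (eqP Hab) take_size_cat.
  move: (f_equal (take (size a)) Eab); rewrite take_size_cat // take_cat Hab => Ea.
  by have := Hb (size a); rewrite Ha0 Hab -Ea Ha ltnn => /(_ isT).
case: (leqP (size s) (size t)) => H; first exact: key E H.
by apply/esym/(key _ _ _ _ Ht Hs (esym E))/ltnW.
Qed.

Lemma boundary ss k : all indecomposable_dyck ss ->
  up (take k (flatten ss)) <= dn (take k (flatten ss)) ->
  exists j, take k (flatten ss) = flatten (take j ss).
Proof.
elim: ss k => [|s ss IH] k /=; first by exists 0.
case/andP=> /indecP[/dyckP[Hb _] Hs0 Hi] Hss.
rewrite take_cat; case: ltnP => Hk.
  case: k Hk => [|k] Hk; first by exists 0; rewrite take0.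
  by move=> H; have := Hi k.+1; rewrite Hk /= => /(_ isT); rewrite ltnNge H.
rewrite !count_cat Hb leq_add2l => /(IH _ Hss) [j Hj].
by exists j.+1; rewrite Hj.
Qed.

Lemma factor v : dyck v -> exists2 ss, all indecomposable_dyck ss & flatten ss = v.
Proof.
move: {2}(size v) (leqnn (size v)) => m; elim: m v => [|m IH] v Hv Hd.
  by case: v Hv Hd => // _ _; exists [::].
case: (posnP (size v)) => [/size0nil -> | Hpos]; first by exists [::].
have [Hb Hp] := (dyckP v).1 Hd.
have ex : exists i, (0 < i) && (up (take i v) == dn (take i v)).
  by exists (size v); rewrite take_size Hb eqxx Hpos.
case: (@ex_minnP (fun i => (0 < i) && (up (take i v) == dn (take i v))) ex) => i /andP[Hi0 /eqP Hib] Hmin.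
have Hiv : i <= size v by apply: Hmin; rewrite take_size Hb eqxx Hpos.
have Ht : indecomposable_dyck (take i v).
  apply/indecP; split.
  - apply/dyckP; split=> // j; rewrite -take_min; exact: Hp.
  - by rewrite size_takel.
  - move=> j; rewrite size_takel // => /andP[Hj0 Hji].
    rewrite take_takel; last exact: ltnW.
    have := Hp j; rewrite leq_eqVlt => /orP[/eqP E|//].
    by have := Hmin j; rewrite Hj0 E eqxx leqNgt Hji => /(_ isT).
have Hr : dyck (drop i v).
  apply/dyckP; split.
    move: Hb; rewrite -{1 2}(cat_take_drop i v) !count_cat Hib => /eqP.
    by rewrite eqn_add2l => /eqP.
  by move=> j; move: (Hp (i + j)); rewrite takeD !count_cat Hib leq_add2l.
have Hsz : size (drop i v) <= m.
  rewrite size_drop; move: Hv Hi0 Hiv; clear; nlia.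
have [ss Hss Ess] := IH (drop i v) Hsz Hr.
by exists (take i v :: ss); rewrite /= ?Ht ?Ess ?cat_take_drop.
Qed.

Lemma rot_min w : up w = dn w -> exists2 k, k <= size w & dyck (rot k w).
Proof.
move=> Hb.
pose g (i : 'I_(size w).+1) := up (take i w) + (size w - dn (take i w)).
case: (arg_minnP (P := xpredT) g (i0 := ord0) isT) => k _ Hmin.
have bnd : forall i, dn (take i w) <= size w.
  move=> i; apply: leq_trans (count_size _ _) _; rewrite size_take_min; exact: geq_minr.
have Hm : forall i, i <= size w -> up (take k w) + dn (take i w) <= up (take i w) + dn (take k w).
  move=> i Hi; have := Hmin (Ordinal (n := (size w).+1) (m := i) Hi) isT.
  rewrite /g /=; have := bnd i; have := bnd k; nlia.
have Hk : k <= size w by rewrite -ltnS ltn_ord.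
exists k => //; apply/dyckP; split.
  by move: Hb; rewrite /rot -{1 2}(cat_take_drop k w) !count_cat; nlia.
move=> i; rewrite /rot take_cat size_drop; case: ltnP => Hi.
  have := Hm (k + i) ltac:(nlia); rewrite takeD !count_cat; nlia.
rewrite -take_min.
have := Hm (minn (i - (size w - k)) k) ltac:(apply: leq_trans (geq_minr _ _) Hk).
move: Hb; rewrite -{1 2}(cat_take_drop k w) !count_cat; nlia.
Qed.

Lemma all_rot (T : Type) (a : pred T) k (s : seq T) : all a (rot k s) = all a s.
Proof. by rewrite /rot all_cat andbC -all_cat cat_take_drop. Qed.

Theorem mainTheorem2 (n : nat) (hn : 1 <= n) :
  (* the map ss |-> necklace of flatten ss is well defined on cyclic classes *)
  (forall ss tt : seq (seq bool), cyc_dyck_seq n ss -> cyc_eq ss tt ->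
      cyc_dyck_seq n tt /\ cyc_eq (flatten ss) (flatten tt)) /\
  (* it lands in (1,1)-balanced necklaces of length 2n *)
  (forall ss, cyc_dyck_seq n ss ->
      balanced11 (flatten ss) /\ size (flatten ss) = 2 * n) /\
  (* injective on cyclic classes *)
  (forall ss tt, cyc_dyck_seq n ss -> cyc_dyck_seq n tt ->
      cyc_eq (flatten ss) (flatten tt) -> cyc_eq ss tt) /\
  (* surjective onto (1,1)-balanced necklaces of length 2n *)
  (forall w : seq bool, size w = 2 * n -> balanced11 w ->
      exists2 ss, cyc_dyck_seq n ss & cyc_eq (flatten ss) w).
Proof.
split; [|split; [|split]].
- move=> ss tt [Hne Hall Hsz] [k <-]; split.
    split.
    + by rewrite -size_eq0 size_rot size_eq0.
    + by rewrite all_rot.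
    + by rewrite rot_flatten size_rot.
  by exists (size (flatten (take k ss))); rewrite rot_flatten.
- move=> ss [_ Hall Hsz]; split=> //; apply/eqP; exact: bal_flatten.
- move=> ss tt [_ Hs _] [_ Ht _] [k Hk].
  have Hle : up (take k (flatten ss)) <= dn (take k (flatten ss)).
    have [_ Hp] := (dyckP _).1 (dyck_flatten _ Ht).
    have Hb := bal_flatten _ Hs.
    rewrite -(cat_take_drop k (flatten ss)) !count_cat in Hb.
    have Hd := Hp (size (drop k (flatten ss))).
    rewrite -Hk /rot take_size_cat // in Hd.
    nlia.
  have [j Hj] := boundary _ _ Hs Hle.
  exists j.
  have Hd : drop k (flatten ss) = flatten (drop j ss).
    apply: (@catI _ (take k (flatten ss))).
    by rewrite cat_take_drop Hj -flatten_cat cat_take_drop.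
  apply: uniq_fact; [by rewrite all_rot | exact: Ht |].
  by rewrite -Hk /rot Hd Hj -flatten_cat.
- move=> w Hw Hb.
  have [k Hk Hd] := rot_min _ (eqP Hb).
  have [ss Hss Ess] := factor _ Hd.
  exists ss.
    split=> //; last by rewrite Ess size_rot.
    apply/eqP=> E; move: Ess; rewrite E /= => /(f_equal size).
    by rewrite size_rot Hw; case: n hn Hw.
  exists (size w - k); rewrite Ess -(size_rot k w); exact: (rotK k w).
Qed.
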